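(* Let $\mathbf{C}$ be a category, take $\mathcal{M}=\mathrm{mono}(\mathbf{C})$ the class of all monomorphisms as stable system of monics, suppose $\mathbf{C}$ has pullbacks along monomorphisms and has a $\mathrm{mono}(\mathbf{C})$-partial map classifier. Then for every composable sequence of monomorphisms $A\xrightarrow{f}B\xrightarrow{m}C$, any final pullback complement $A\xrightarrow{n}F\xrightarrow{g}C$ of $(f,m)$ satisfies that both $n$ and $g$ are monomorphisms.
   Context: Final pullback complement (FPC) of composable $A\xrightarrow{f}B\xrightarrow{m}C$: a pair $A\xrightarrow{n}F\xrightarrow{g}C$ with $g\circ n=m\circ f$ forming a pullback square, such that for every pullback square $m\circ u=w\circ v$ ($u:X\to B$, $v:X\to Y$, $w:Y\to C$) and every $t:X\to A$ with $f\circ t=u$ there is a unique $y:Y\to F$ with $g\circ y=w$ and $y\circ v=n\circ t$. ''Has pullbacks along monomorphisms'': pullbacks of cospans $A\to B\leftarrow B'$ with $B'\to B$ monic exist. For a stable system of monics $\mathcal{M}$ (a class of monos containing isomorphisms, closed under composition and pullback), an $\mathcal{M}$-partial map classifier is a functor $T:\mathbf{C}\to\mathbf{C}$ with a natural transformation $\eta:\mathrm{Id}_{\mathbf{C}}\Rightarrow T$ such that each $\eta_X\in\mathcal{M}$ and for every span $A\xleftarrow{m}X\xrightarrow{f}B$ with $m\in\mathcal{M}$ there is a unique $\varphi:A\to T(B)$ such that $(m,f)$ is a pullback of $(\varphi,\eta_B)$. *)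

(* Defs.v *)
Set Implicit Arguments.
Unset Strict Implicit.

Record Category := {
  Ob :> Type;
  Hom : Ob -> Ob -> Type;
  idm : forall a, Hom a a;
  comp : forall x y z, Hom y z -> Hom x y -> Hom x z;
  comp_assoc : forall a b c' d (h : Hom c' d) (g : Hom b c') (f : Hom a b),
      comp h (comp g f) = comp (comp h g) f;
  comp_id_l : forall a b (f : Hom a b), comp (idm b) f = f;
  comp_id_r : forall a b (f : Hom a b), comp f (idm a) = f
}.

Arguments Hom {c} _ _.
Arguments idm {c} _.
Arguments comp {c x y z} _ _.

Notation "g \o' f" := (comp g f) (at level 40, left associativity).

Section Defs.
Variable C : Category.

Definition mono {a b : C} (m : Hom a b) : Prop :=
  forall x (u v : Hom x a), m \o' u = m \o' v -> u = v.

Definition is_pullback {P A B Z : C} (p1 : Hom P A) (p2 : Hom P B)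
  (f : Hom A Z) (g : Hom B Z) : Prop :=
  f \o' p1 = g \o' p2 /\
  forall X (x1 : Hom X A) (x2 : Hom X B), f \o' x1 = g \o' x2 ->
    exists! u : Hom X P, p1 \o' u = x1 /\ p2 \o' u = x2.

Definition has_pullbacks_along_monos : Prop :=
  forall (A B B' : C) (f : Hom A B) (m : Hom B' B), mono m ->
    exists (P : C) (p1 : Hom P A) (p2 : Hom P B'), is_pullback p1 p2 f m.

Definition is_mono_pmc (T0 : C -> C) (T1 : forall a b : C, Hom a b -> Hom (T0 a) (T0 b))
  (eta : forall a : C, Hom a (T0 a)) : Prop :=
  (forall a : C, T1 a a (idm a) = idm (T0 a)) /\
  (forall (a b c : C) (g : Hom b c) (f : Hom a b),
      T1 a c (g \o' f) = T1 b c g \o' T1 a b f) /\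
  (forall (a b : C) (f : Hom a b), T1 a b f \o' eta a = eta b \o' f) /\
  (forall a : C, mono (eta a)) /\
  (forall (A X B : C) (m : Hom X A) (f : Hom X B), mono m ->
     exists! phi : Hom A (T0 B), is_pullback m f phi (eta B)).

Definition has_mono_pmc : Prop :=
  exists (T0 : C -> C) (T1 : forall a b : C, Hom a b -> Hom (T0 a) (T0 b))
         (eta : forall a : C, Hom a (T0 a)), is_mono_pmc T1 eta.

Definition is_fpc {A B Zc F : C} (f : Hom A B) (m : Hom B Zc)
  (n : Hom A F) (g : Hom F Zc) : Prop :=
  is_pullback f n m g /\
  forall (X Y : C) (u : Hom X B) (v : Hom X Y) (w : Hom Y Zc),
    is_pullback u v m w ->
    forall t : Hom X A, f \o' t = u ->
      exists! y : Hom Y F, g \o' y = w /\ y \o' v = n \o' t.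

End Defs.

Arguments mono {C a b} _.
Arguments is_pullback {C P A B Z} _ _ _ _.
Arguments is_fpc {C A B Zc F} _ _ _ _.

(* Main.v *)
Require Import Defs.

Lemma pb_sym {C : Category} {P A B Z : C} {p1 : Hom P A} {p2 : Hom P B}
  {f : Hom A Z} {g : Hom B Z} :
  is_pullback p1 p2 f g -> is_pullback p2 p1 g f.
Proof.
  intros [H1 H2]. split; [symmetry; exact H1|].
  intros X x1 x2 Hx. destruct (H2 X x2 x1 (eq_sym Hx)) as [u [[Hu1 Hu2] Hun]].
  exists u. split; [split; assumption|].
  intros u' [E1 E2]. apply Hun. split; assumption.
Qed.

Theorem mainTheorem11 (C : Category) :
  has_pullbacks_along_monos C -> has_mono_pmc C ->
  forall (A B Z F : C) (f : Hom A B) (m : Hom B Z) (n : Hom A F) (g : Hom F Z),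
    mono f -> mono m -> is_fpc f m n g -> mono n /\ mono g.
Proof.
  intros HPB _ A B Z F f m n g Hf Hm [[Hsq Hpb] Hfpc].
  split.
  - intros X u v E.
    apply Hf. apply Hm. rewrite !comp_assoc, !Hsq, <- !comp_assoc, E. reflexivity.
  - intros X a b E.
    destruct (HPB X Z B (g \o' a) m Hm) as [P [p1 [p2 Hp]]].
    pose proof (pb_sym Hp) as Hp'.
    destruct Hp as [Hpsq _].
    destruct (Hpb P p2 (a \o' p1)) as [t [[Ht1 Ht2] _]].
    { rewrite comp_assoc. symmetry. exact Hpsq. }
    destruct (Hpb P p2 (b \o' p1)) as [t' [[Ht1' Ht2'] _]].
    { rewrite comp_assoc, <- E. symmetry. exact Hpsq. }
    assert (tt : t = t') by (apply Hf; rewrite Ht1, Ht1'; reflexivity).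
    subst t'.
    destruct (Hfpc P X p2 p1 (g \o' a) Hp' t Ht1) as [y [_ Hy]].
    transitivity y; [symmetry|]; apply Hy; split; auto.
Qed.
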